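(* Let $G$ be a group. (i) If $H \leqslant M \leqslant G$, $M$ is exponential in $G$ and $H$ is exponential in $M$, then $H$ is exponential in $G$. (ii) If $H$ and $K$ are exponential subgroups of $G$, then $H \cap K$ is exponential in $G$.
   Context: A subgroup $H$ of finite index in a group $G$ is called exponential in $G$ if $x^{|G:H|} \in H$ for every $x \in G$. *)

(* Defs.v *)
From Stdlib Require Import Arith.

Set Implicit Arguments.

Record group := Group {
  carrier :> Type;
  gmul : carrier -> carrier -> carrier;
  gone : carrier;
  ginv : carrier -> carrier;
  gmulA : forall x y z, gmul x (gmul y z) = gmul (gmul x y) z;
  gmul1 : forall x, gmul gone x = x;
  gmulV : forall x, gmul (ginv x) x = gone
}.

Arguments gmul {g}.
Arguments gone {g}.
Arguments ginv {g}.

Fixpoint gpow {G : group} (x : G) (n : nat) : G :=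
  match n with
  | O => gone
  | S m => gmul x (gpow x m)
  end.

Definition is_subgroup {G : group} (H : G -> Prop) : Prop :=
  H gone /\ (forall x y, H x -> H y -> H (gmul x y)) /\
  (forall x, H x -> H (ginv x)).

Definition subset {G : group} (A B : G -> Prop) : Prop := forall x, A x -> B x.

Definition whole (G : group) : G -> Prop := fun _ => True.

Definition inter {G : group} (A B : G -> Prop) : G -> Prop :=
  fun x => A x /\ B x.

(* |M : H| = n : there is a left transversal t_0, ..., t_(n-1) in M of H,
   i.e. every x in M lies in exactly one left coset t_i H, i < n. *)
Definition has_index {G : group} (M H : G -> Prop) (n : nat) : Prop :=
  exists t : nat -> G,
    (forall i, i < n -> M (t i)) /\
    (forall x, M x ->
       (exists i, i < n /\ H (gmul (ginv (t i)) x)) /\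
       (forall i j, i < n -> j < n ->
          H (gmul (ginv (t i)) x) -> H (gmul (ginv (t j)) x) -> i = j)).

Definition exponential {G : group} (M H : G -> Prop) : Prop :=
  exists n, has_index M H n /\ (forall x, M x -> H (gpow x n)).

(* Main.v *)
Require Import Defs.
From Stdlib Require Import Arith.
From Stdlib Require Import ClassicalEpsilon Classical Lia List.

Section GG.
Variable G : group.

Lemma mulVr (x : G) : gmul x (ginv x) = gone.
Proof.
  set (y := gmul x (ginv x)).
  assert (Hy : gmul y y = y).
  { unfold y. rewrite <- gmulA. rewrite (gmulA _ (ginv x) x (ginv x)).
    rewrite gmulV, gmul1. reflexivity. }
  rewrite <- (gmul1 _ y). rewrite <- (gmulV _ y) at 1.
  rewrite <- gmulA, Hy. apply gmulV.
Qed.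

Lemma mulr1 (x : G) : gmul x gone = x.
Proof. rewrite <- (gmulV _ x), gmulA, mulVr, gmul1. reflexivity. Qed.

Lemma inv_uniq (a b : G) : gmul a b = gone -> a = ginv b.
Proof.
  intro E. rewrite <- (mulr1 a), <- (mulVr b), gmulA, E, gmul1. reflexivity.
Qed.

Lemma invinv (x : G) : ginv (ginv x) = x.
Proof. symmetry. apply inv_uniq. apply mulVr. Qed.

Lemma invM (x y : G) : ginv (gmul x y) = gmul (ginv y) (ginv x).
Proof.
  symmetry. apply inv_uniq.
  rewrite <- gmulA, (gmulA _ (ginv x) x y), gmulV, gmul1, gmulV. reflexivity.
Qed.

Lemma quot (t x y : G) :
  gmul (ginv x) y = gmul (ginv (gmul (ginv t) x)) (gmul (ginv t) y).
Proof.
  rewrite invM, invinv, <- gmulA, (gmulA _ t (ginv t) y), mulVr, gmul1. reflexivity.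
Qed.

Lemma gpow_add (x : G) a b : gpow x (a + b) = gmul (gpow x a) (gpow x b).
Proof.
  induction a; simpl. rewrite gmul1; auto. rewrite IHa, gmulA. auto.
Qed.

Lemma gpow_mul (x : G) a b : gpow x (a * b) = gpow (gpow x a) b.
Proof.
  induction b; simpl. rewrite Nat.mul_0_r; auto.
  rewrite Nat.mul_succ_r, Nat.add_comm, gpow_add, IHb. auto.
Qed.

Lemma sub_pow (H : G -> Prop) x n : is_subgroup H -> H x -> H (gpow x n).
Proof.
  intros [H1 [HM HI]] Hx. induction n; simpl; auto.
Qed.

Lemma sub_quot (H : G -> Prop) t x y : is_subgroup H ->
  H (gmul (ginv t) x) -> H (gmul (ginv t) y) -> H (gmul (ginv x) y).
Proof.
  intros [H1 [HM HI]] A B. rewrite (quot t). auto.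
Qed.

Definition cls (M H : G -> Prop) (n : nat) (f : G -> nat) : Prop :=
  (forall x, M x -> f x < n) /\
  (forall x y, M x -> M y -> (f x = f y <-> H (gmul (ginv x) y))) /\
  (forall i, i < n -> exists x, M x /\ f x = i).

Lemma lemA M H n : is_subgroup H -> has_index M H n -> exists f, cls M H n f.
Proof.
  intros HS [t [Ht Hx]].
  pose (f := fun x => epsilon (inhabits 0) (fun i => i < n /\ H (gmul (ginv (t i)) x))).
  assert (Sf : forall x, M x -> f x < n /\ H (gmul (ginv (t (f x))) x)).
  { intros x Mx. apply epsilon_spec. apply (Hx x Mx). }
  exists f. split; [|split].
  - intros x Mx. apply Sf; auto.
  - intros x y Mx My. split.
    + intro E. destruct (Sf x Mx) as [_ A]. destruct (Sf y My) as [_ B].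
      rewrite E in A. eapply sub_quot; eauto.
    + intro Hq. destruct (Sf x Mx) as [A1 A]. destruct (Sf y My) as [B1 B].
      apply (proj2 (Hx y My)); auto.
      destruct HS as [_ [HM _]].
      assert (E : gmul (ginv (t (f x))) y =
                  gmul (gmul (ginv (t (f x))) x) (gmul (ginv x) y)).
      { rewrite <- gmulA, (gmulA _ x (ginv x) y), mulVr, gmul1. auto. }
      rewrite E. auto.
  - intros i Hi. exists (t i). split; auto.
    destruct (Sf (t i) (Ht i Hi)) as [A1 A].
    apply (proj2 (Hx (t i) (Ht i Hi))); auto. rewrite gmulV. apply HS.
Qed.

Lemma lemB M H n f : cls M H n f -> has_index M H n.
Proof.
  intros [Hb [He Hs]].
  pose (t := fun i => epsilon (inhabits gone) (fun x => M x /\ f x = i)).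
  assert (St : forall i, i < n -> M (t i) /\ f (t i) = i).
  { intros i Hi. apply epsilon_spec. auto. }
  exists t. split.
  - intros i Hi. apply St; auto.
  - intros x Mx. split.
    + exists (f x). split; auto. destruct (St (f x) (Hb x Mx)) as [A B].
      apply He; auto.
    + intros i j Hi Hj A B. destruct (St i Hi) as [A1 A2]. destruct (St j Hj) as [B1 B2].
      apply (He _ _ A1 Mx) in A. apply (He _ _ B1 Mx) in B. lia.
Qed.

Lemma pigeon n n' (h : nat -> nat) :
  (forall i, i < n -> h i < n') ->
  (forall i j, i < n -> j < n -> h i = h j -> i = j) -> n <= n'.
Proof.
  intros B I.
  rewrite <- (length_seq n 0), <- (length_seq n' 0), <- (length_map h).
  apply NoDup_incl_length.
  - apply NoDup_map_NoDup_ForallPairs. 2: apply seq_NoDup.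
    intros a b Ha Hb. apply in_seq in Ha. apply in_seq in Hb. apply I; lia.
  - intros y Hy. apply in_map_iff in Hy. destruct Hy as [a [<- Ha]].
    apply in_seq in Ha. apply in_seq. specialize (B a). lia.
Qed.

Lemma lemC_le M H n n' f g : cls M H n f -> cls M H n' g -> n <= n'.
Proof.
  intros [fb [fe fs]] [gb [ge gs]].
  pose (r := fun i => epsilon (inhabits gone) (fun x => M x /\ f x = i)).
  assert (Sr : forall i, i < n -> M (r i) /\ f (r i) = i).
  { intros i Hi. apply epsilon_spec. auto. }
  apply (pigeon n n' (fun i => g (r i))).
  - intros i Hi. apply gb, Sr; auto.
  - intros i j Hi Hj E. destruct (Sr i Hi) as [A1 A2]. destruct (Sr j Hj) as [B1 B2].
    apply (ge _ _ A1 B1) in E. apply (fe _ _ A1 B1) in E. lia.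
Qed.

Lemma enum (P : nat -> Prop) N : exists n (e : nat -> nat),
  (forall i, i < n -> e i < N /\ P (e i)) /\
  (forall k, k < N -> P k -> exists i, i < n /\ e i = k) /\
  (forall i j, i < n -> j < n -> e i = e j -> i = j).
Proof.
  induction N.
  - exists 0, (fun i => i). split; [intros; lia|split; intros; lia].
  - destruct IHN as [n [e [A [B C]]]]. destruct (classic (P N)) as [PN|PN].
    + exists (S n), (fun i => if i =? n then N else e i). split; [|split].
      * intros i Hi. destruct (Nat.eqb_spec i n). split; auto.
        destruct (A i ltac:(lia)). split; auto.
      * intros k Hk Pk. destruct (Nat.eq_dec k N).
        -- exists n. rewrite Nat.eqb_refl. split; auto.
        -- destruct (B k ltac:(lia) Pk) as [i [Hi Ei]]. exists i.
           destruct (Nat.eqb_spec i n); [lia|]. split; auto.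
      * intros i j Hi Hj. destruct (Nat.eqb_spec i n), (Nat.eqb_spec j n).
        -- lia.
        -- destruct (A j ltac:(lia)). lia.
        -- destruct (A i ltac:(lia)). lia.
        -- apply C; lia.
    + exists n, e. split; [|split].
      * intros i Hi. destruct (A i Hi). split; auto.
      * intros k Hk Pk. destruct (Nat.eq_dec k N). subst; contradiction.
        apply B; auto. lia.
      * auto.
Qed.

Lemma lemE M H N f :
  (forall x, M x -> f x < N) ->
  (forall x y, M x -> M y -> (f x = f y <-> H (gmul (ginv x) y))) ->
  exists n g, cls M H n g.
Proof.
  intros fb fe.
  destruct (enum (fun k => exists x, M x /\ f x = k) N) as [n [e [A [B C]]]].
  pose (g := fun x => epsilon (inhabits 0) (fun i => i < n /\ e i = f x)).
  assert (Sg : forall x, M x -> g x < n /\ e (g x) = f x).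
  { intros x Mx. apply epsilon_spec. apply B; eauto. }
  exists n, g. split; [|split].
  - intros x Mx. apply Sg; auto.
  - intros x y Mx My. rewrite <- fe; auto.
    destruct (Sg x Mx), (Sg y My). split; intro E.
    + congruence.
    + apply C; auto; congruence.
  - intros i Hi. destruct (A i Hi) as [_ [x [Mx Ex]]]. exists x. split; auto.
    destruct (Sg x Mx). apply C; auto; congruence.
Qed.

Lemma divmod_uniq a b c d p : b < p -> d < p -> a * p + b = c * p + d -> a = c /\ b = d.
Proof.
  intros Hb Hd E.
  assert (a = c).
  { destruct (Nat.lt_trichotomy a c) as [L|[L|L]]; auto.
    - assert (S a * p <= c * p) by (apply Nat.mul_le_mono_r; lia). simpl in *. lia.
    - assert (S c * p <= a * p) by (apply Nat.mul_le_mono_r; lia). simpl in *. lia. }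
  subst. lia.
Qed.

Lemma lemD M H m p f g : is_subgroup M -> is_subgroup H -> subset H M ->
  cls (whole G) M m f -> cls M H p g -> exists F, cls (whole G) H (m * p) F.
Proof.
  intros SM SH sub [fb [fe fs]] [gb [ge gs]].
  pose (t := fun i => epsilon (inhabits gone) (fun x => whole G x /\ f x = i)).
  assert (St : forall x, f (t (f x)) = f x).
  { intro x. apply (epsilon_spec (inhabits gone) (fun y => whole G y /\ f y = f x)).
    exists x. split; [exact I|auto]. }
  assert (Mt : forall x, M (gmul (ginv (t (f x))) x)).
  { intro x. apply fe. exact I. exact I. apply St. }
  exists (fun x => f x * p + g (gmul (ginv (t (f x))) x)). split; [|split].
  - intros x _. assert (f x < m) by (apply fb; exact I).
    assert (g (gmul (ginv (t (f x))) x) < p) by (apply gb; auto).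
    assert (f x * p + p <= m * p).
    { replace (f x * p + p) with (S (f x) * p) by (simpl; lia).
      apply Nat.mul_le_mono_r; lia. }
    lia.
  - intros x y _ _. split.
    + intro E. apply divmod_uniq in E; try (apply gb; auto).
      destruct E as [E1 E2]. rewrite E1 in E2.
      apply ge in E2; auto. rewrite (quot (t (f y)) x y). auto. rewrite <- E1. apply Mt.
    + intro Hq. assert (E1 : f x = f y). { apply fe; try exact I. auto. }
      rewrite E1. f_equal. apply ge; auto. rewrite <- E1. apply Mt. rewrite <- (quot (t (f y)) x y). auto.
  - intros k Hk. assert (Pp : 0 < p) by (destruct p; lia).
    assert (Hi : k / p < m). { apply Nat.Div0.div_lt_upper_bound. lia. }
    destruct (fs (k / p) Hi) as [x0 [_ Ex0]].
    destruct (gs (k mod p) (Nat.mod_upper_bound k p ltac:(lia))) as [y [My Ey]].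
    pose (u := t (f x0)).
    assert (Mz : M (gmul (ginv u) (gmul u y))).
    { rewrite gmulA, gmulV, gmul1. auto. }
    assert (Fz : f (gmul u y) = f x0).
    { transitivity (f u). symmetry. apply fe; try exact I. exact Mz. apply St. }
    exists (gmul u y). split. exact I.
    rewrite Fz. fold u. rewrite gmulA, gmulV, gmul1, Ey, Ex0.
    rewrite Nat.mul_comm. symmetry. apply Nat.div_mod. lia.
Qed.

End GG.
Arguments lemA {G M H n}.
Arguments lemB {G M H n f}.
Arguments lemC_le {G M H n n' f g}.
Arguments lemD {G M H m p f g}.
Arguments lemE {G M H N f}.
Arguments gpow_mul {G}.
Arguments sub_pow {G H x n}.

Theorem lemma4p6 (G : group) :
  (forall H M : G -> Prop,
     is_subgroup H -> is_subgroup M -> subset H M ->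
     exponential (whole G) M -> exponential M H ->
     exponential (whole G) H) /\
  (forall H K : G -> Prop,
     is_subgroup H -> is_subgroup K ->
     exponential (whole G) H -> exponential (whole G) K ->
     exponential (whole G) (inter H K)).
Proof.
  split.
  - intros H M SH SM sub [m [Im Pm]] [p [Ip Pp]].
    destruct (lemA SM Im) as [f Cf]. destruct (lemA SH Ip) as [g Cg].
    destruct (lemD SM SH sub Cf Cg) as [F CF].
    exists (m * p). split. eapply lemB; eauto.
    intros x _. rewrite gpow_mul. apply Pp. apply Pm. exact I.
  - intros H K SH SK [m [Im Pm]] [k [Ik Pk]].
    destruct (lemA SH Im) as [fH CH]. destruct (lemA SK Ik) as [fK CK].
    assert (SI : is_subgroup (inter H K)).
    { destruct SH as [a [b c]], SK as [d [e f]]. split; [|split]; unfold inter.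
      split; auto. intros x y [] []; split; auto. intros x []; split; auto. }
    destruct CH as [hb [he hs]]. destruct CK as [kb [ke ks]].
    destruct (lemE (M:=H) (H:=inter H K) (N:=k) (f:=fK)) as [p [g Cg]].
    { intros x _. apply kb. exact I. }
    { intros x y Hx Hy. rewrite ke by exact I. unfold inter. split.
      - intro. split; auto. destruct SH as [a [b c]]. auto.
      - tauto. }
    destruct (lemE (M:=K) (H:=inter H K) (N:=m) (f:=fH)) as [q [g' Cg']].
    { intros x _. apply hb. exact I. }
    { intros x y Hx Hy. rewrite he by exact I. unfold inter. split.
      - intro. split; auto. destruct SK as [a [b c]]. auto.
      - tauto. }
    assert (CH : cls G (whole G) H m fH) by (split; auto).
    assert (CK : cls G (whole G) K k fK) by (split; auto).
    destruct (lemD SH SI (fun x (h : inter H K x) => proj1 h) CH Cg) as [F1 C1].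
    destruct (lemD SK SI (fun x (h : inter H K x) => proj2 h) CK Cg') as [F2 C2].
    assert (E : m * p = k * q).
    { apply Nat.le_antisymm; eapply lemC_le; eauto. }
    exists (m * p). split. eapply lemB; eauto.
    intros x _. split.
    + rewrite gpow_mul. apply sub_pow; auto. apply Pm. exact I.
    + rewrite E, gpow_mul. apply sub_pow; auto. apply Pk. exact I.
Qed.
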